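(* Let $p=2$. For every $\boldsymbol\lambda\in\mathbb Q^2$, \[ \mathbb{G}_{\boldsymbol{\lambda}}(\tau)= \sum_{\mathbf n\in\mathbb N_0^2} q^{2Q\left(\mathbf{n}+\boldsymbol{\lambda}+\left(\frac12,\frac12\right)\right)} -\sum_{n_2>n_1\geq 0} q^{2Q\left(\mathbf{n}+\boldsymbol{\lambda}+\left(\frac12,\, 0\right)\right)} -\sum_{n_1>n_2\geq 0} q^{2Q\left(\mathbf{n}+\boldsymbol{\lambda}+\left(0,\frac12\right)\right)}. \]
   Context: $q:=e^{2\pi i\tau}$, $\tau\in\mathbb H$. $Q(\mathbf n):=n_1^2+n_2^2-n_1n_2$; $\mathbb N=\{1,2,\dots\}$, $\mathbb N_0=\{0,1,2,\dots\}$; the sums over $n_2>n_1\ge0$ etc. are over integer pairs $\mathbf n=(n_1,n_2)$. With $p=2$, for $\boldsymbol{\lambda}\in\mathbb Q^2$, \begin{multline*} \mathbb{G}_{\boldsymbol{\lambda}}(\tau):=\sum_{\mathbf{n} \in \mathbb N^2} {\rm min}(n_1,n_2)\,q^{2 Q\left(\mathbf n+\boldsymbol{\lambda}- \left(\frac12, \frac12\right)\right)} \Big(1-q^{2\left(n_1+\lambda_1\right)-\left(n_2+\lambda_2\right)}-q^{2\left(n_2+\lambda_2\right)-\left(n_1+\lambda_1\right)}\\+q^{3\left(n_1+\lambda_1\right)}+q^{3\left(n_2+\lambda_2\right)}-q^{2\left(n_1+\lambda_1\right)+2\left(n_2+\lambda_2\right)}\Big). \end{multline*} *)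

(* Defs.v *)
From Stdlib Require Import Reals QArith.
From Coquelicot Require Import Coquelicot.
Open Scope R_scope.

Definition cexp (z : C) : C :=
  (exp (Re z) * cos (Im z), exp (Re z) * sin (Im z)).

Definition qpow (tau : C) (x : R) : C :=
  cexp (Cmult (Cmult (0, 2 * PI) tau) (RtoC x)).

Definition Qf (x1 x2 : R) : R := x1 ^ 2 + x2 ^ 2 - x1 * x2.

Definition psum2 (f : nat -> nat -> C) (N : nat) : C :=
  sum_n (fun i => sum_n (fun j => f i j) N) N.

Definition sum2_is (f : nat -> nat -> C) (l : C) : Prop :=
  filterlim (psum2 f) eventually (locally l).

Definition indic (b : bool) (z : C) : C := if b then z else RtoC 0.

(* summand of G_lambda(tau); the sum ranges over n in N^2, i.e. n1,n2 >= 1 *)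
Definition G_term (tau : C) (l1 l2 : R) (n1 n2 : nat) : C :=
  let a := INR n1 + l1 in
  let b := INR n2 + l2 in
  indic ((1 <=? n1)%nat && (1 <=? n2)%nat)
   (Cmult (Cmult (RtoC (INR (Nat.min n1 n2)))
                 (qpow tau (2 * Qf (a - /2) (b - /2))))
     (Cminus (Cplus (Cminus (Cminus (RtoC 1) (qpow tau (2 * a - b)))
                            (qpow tau (2 * b - a)))
                    (Cplus (qpow tau (3 * a)) (qpow tau (3 * b))))
             (qpow tau (2 * a + 2 * b)))).

Definition A_term (tau : C) (l1 l2 : R) (n1 n2 : nat) : C :=
  qpow tau (2 * Qf (INR n1 + l1 + /2) (INR n2 + l2 + /2)).

Definition B_term (tau : C) (l1 l2 : R) (n1 n2 : nat) : C :=
  indic (n1 <? n2)%nat (qpow tau (2 * Qf (INR n1 + l1 + /2) (INR n2 + l2))).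

Definition C_term (tau : C) (l1 l2 : R) (n1 n2 : nat) : C :=
  indic (n2 <? n1)%nat (qpow tau (2 * Qf (INR n1 + l1) (INR n2 + l2 + /2))).

(* Main.v *)
Require Import Defs.
From Stdlib Require Import Reals QArith.
From Coquelicot Require Import Coquelicot.
Open Scope R_scope.
From Stdlib Require Import Lia Lra.
Ltac cring := match goal with |- ?a = ?b => change (@eq C a b) end; ring.

Lemma sumC_S (f : nat -> C) n : sum_n f (S n) = Cplus (sum_n f n) (f (S n)).
Proof. exact (@sum_Sn C_AbelianMonoid f n). Qed.
Lemma sumC_O (f : nat -> C) : sum_n f 0 = f 0%nat.
Proof. exact (@sum_O C_AbelianMonoid f). Qed.
Lemma sumC_ext (f g : nat -> C) n : (forall i, f i = g i) -> sum_n f n = sum_n g n.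
Proof. intros; apply sum_n_ext; auto. Qed.
Lemma sumC_ext_loc (f g : nat -> C) n : (forall i, (i <= n)%nat -> f i = g i) -> sum_n f n = sum_n g n.
Proof. intros; apply sum_n_ext_loc; auto. Qed.

Lemma sumC_plus (f g : nat -> C) n : sum_n (fun i => Cplus (f i) (g i)) n = Cplus (sum_n f n) (sum_n g n).
Proof. induction n. rewrite !sumC_O; auto. rewrite !sumC_S, IHn. cring. Qed.
Lemma sumC_opp (f : nat -> C) n : sum_n (fun i => Copp (f i)) n = Copp (sum_n f n).
Proof. induction n. rewrite !sumC_O; auto. rewrite !sumC_S, IHn. cring. Qed.
Lemma sumC_minus (f g : nat -> C) n : sum_n (fun i => Cminus (f i) (g i)) n = Cminus (sum_n f n) (sum_n g n).
Proof. induction n. rewrite !sumC_O; auto. rewrite !sumC_S, IHn. cring. Qed.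
Lemma sumC_zero n : sum_n (fun _ => RtoC 0) n = RtoC 0.
Proof. induction n. rewrite !sumC_O; auto. rewrite !sumC_S, IHn. cring. Qed.
Lemma sumC_shift (f : nat -> C) n : sum_n f (S n) = Cplus (f 0%nat) (sum_n (fun i => f (S i)) n).
Proof. induction n. rewrite sumC_S, !sumC_O; auto. rewrite sumC_S, IHn, (sumC_S (fun i => f (S i))). cring. Qed.

Lemma fubini (f : nat -> nat -> C) n m :
  sum_n (fun i => sum_n (fun j => f i j) m) n = sum_n (fun j => sum_n (fun i => f i j) n) m.
Proof.
  induction n.
  - rewrite sumC_O. apply sumC_ext. intro; rewrite sumC_O; auto.
  - rewrite sumC_S, IHn, <- sumC_plus. apply sumC_ext. intro; rewrite sumC_S; auto.
Qed.

Lemma psum2_ext (f g : nat -> nat -> C) N : (forall i j, f i j = g i j) -> psum2 f N = psum2 g N.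
Proof. intros H; unfold psum2; apply sumC_ext; intro; apply sumC_ext; auto. Qed.
Lemma psum2_plus (f g : nat -> nat -> C) N : psum2 (fun i j => Cplus (f i j) (g i j)) N = Cplus (psum2 f N) (psum2 g N).
Proof. unfold psum2. rewrite <- sumC_plus. apply sumC_ext; intro. apply sumC_plus. Qed.

Lemma Cmod_sum_bound (f : nat -> C) n B : (forall i, (i <= n)%nat -> Cmod (f i) <= B) -> Cmod (sum_n f n) <= INR (S n) * B.
Proof.
  induction n; intros H.
  - rewrite sumC_O. simpl. specialize (H 0%nat (le_n _)). lra.
  - rewrite sumC_S. eapply Rle_trans. apply Cmod_triangle.
    rewrite S_INR. specialize (IHn (fun i Hi => H i (le_S _ _ Hi))). specialize (H (S n) (le_n _)). lra.
Qed.

Lemma exp_le (x y : R) : x <= y -> exp x <= exp y.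
Proof. intros H. destruct (Rle_lt_or_eq_dec _ _ H). left; apply exp_increasing; auto. subst; lra. Qed.

Lemma Cmod_indic b z : Cmod (indic b z) <= Cmod z.
Proof. destruct b; simpl. lra. rewrite Cmod_0. apply Cmod_ge_0. Qed.
Lemma sumC_zero_ext (f : nat -> C) n : (forall i, f i = RtoC 0) -> sum_n f n = RtoC 0.
Proof. intros H. rewrite (sumC_ext f (fun _ => RtoC 0)) by auto. apply sumC_zero. Qed.
Lemma indic_false z : indic false z = RtoC 0.
Proof. reflexivity. Qed.
Lemma indic_true z : indic true z = z.
Proof. reflexivity. Qed.
Lemma Cring_helper (a b : C) : Cplus a (RtoC 0) = Cplus b (RtoC 0) -> a = b.
Proof. intros H. rewrite !Cplus_0_r in H. exact H. Qed.
Ltac cring ::= match goal with |- ?a = ?b => apply (Cring_helper a b) end; ring.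


Lemma abelS (w : nat -> R) (u : nat -> C) M : w 0%nat = 0 ->
  sum_n (fun n => indic (1 <=? n)%nat (Cmult (RtoC (w n)) (Cminus (u n) (u (pred n))))) (S M)
  = Cminus (Cmult (RtoC (w (S M))) (u (S M))) (sum_n (fun n => Cmult (RtoC (w (S n) - w n)) (u n)) M).
Proof.
  intros H0. induction M.
  - rewrite sumC_S, !sumC_O. simpl. rewrite RtoC_minus, H0. cring.
  - rewrite sumC_S, IHM, (sumC_S (fun n => Cmult (RtoC (w (S n) - w n)) (u n))). simpl indic.
    rewrite RtoC_minus. cring.
Qed.

Lemma RL (u : nat -> nat -> C) M :
 sum_n (fun c => sum_n (fun n => indic (1<=?c)%nat (indic (1<=?n)%nat (Cmult (RtoC (INR (Nat.min n c))) (Cminus (u n c) (u (pred n) c))))) (S M)) (S M)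
 = Cminus (sum_n (fun c => indic (1<=?c)%nat (Cmult (RtoC (INR (Nat.min (S M) c))) (u (S M) c))) (S M))
          (sum_n (fun c => sum_n (fun n => indic (n <? c)%nat (u n c)) M) (S M)).
Proof.
  rewrite <- sumC_minus. apply sumC_ext; intro c. destruct c as [|c].
  - rewrite sumC_zero_ext by (intro; reflexivity).
    rewrite (sumC_zero_ext (fun n => indic (n <? 0)%nat (u n 0%nat))) by (intro; reflexivity).
    simpl. cring.
  - rewrite (sumC_ext _ (fun n => indic (1 <=? n)%nat (Cmult (RtoC (INR (Nat.min n (S c)))) (Cminus (u n (S c)) (u (pred n) (S c)))))) by (intro; reflexivity).
    rewrite (abelS (fun n => INR (Nat.min n (S c))) (fun n => u n (S c))) by reflexivity.
    simpl indic at 2. f_equal. apply sumC_ext. intro n.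
    destruct (Nat.ltb_spec n (S c)) as [Hl|Hl]; unfold indic.
    + rewrite Nat.min_l by lia. rewrite Nat.min_l by lia. rewrite S_INR.
      replace (INR n + 1 - INR n) with 1 by ring. cring.
    + rewrite Nat.min_r by lia. rewrite Nat.min_r by lia.
      replace (INR (S c) - INR (S c)) with 0 by ring. cring.
Qed.


Definition Gt (h k l : nat -> nat -> C) (n1 n2 : nat) : C :=
  indic ((1 <=? n1)%nat && (1 <=? n2)%nat)
   (Cmult (RtoC (INR (Nat.min n1 n2)))
     (Cminus (Cplus (Cplus (Cminus (Cminus (h (pred n1) (pred n2)) (l n1 (pred n2))) (k (pred n1) n2)) (k n1 n2)) (l n1 n2)) (h n1 n2))).
Definition Bt (k : nat -> nat -> C) (n1 n2 : nat) : C := indic (n1 <? n2)%nat (k n1 n2).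
Definition Ct (l : nat -> nat -> C) (n1 n2 : nat) : C := indic (n2 <? n1)%nat (l n1 n2).
Definition Bd (u : nat -> nat -> C) M : C :=
  sum_n (fun c => indic (1<=?c)%nat (Cmult (RtoC (INR (Nat.min (S M) c))) (u (S M) c))) (S M).
Definition bd (h k l : nat -> nat -> C) M : C :=
  Cplus (Cplus (Cplus (Cplus (Bd (fun n c => Copp (h n (pred c))) M) (Bd (fun n c => Copp (h c n)) M))
     (Bd k M)) (Bd (fun n c => l c n) M)) (sum_n (h (S M)) M).

Definition TT (u : nat -> nat -> C) (n c : nat) : C :=
  indic (1<=?c)%nat (indic (1<=?n)%nat (Cmult (RtoC (INR (Nat.min n c))) (Cminus (u n c) (u (pred n) c)))).

Lemma RL' u M : sum_n (fun c => sum_n (fun n => TT u n c) (S M)) (S M)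
  = Cminus (Bd u M) (sum_n (fun c => sum_n (fun n => indic (n <? c)%nat (u n c)) M) (S M)).
Proof. apply RL. Qed.

Lemma ML1 (h : nat -> nat -> C) M :
  Cplus (sum_n (fun c => sum_n (fun n => indic (n <? c)%nat (h n (pred c))) M) (S M))
        (sum_n (fun c => sum_n (fun n => indic (n <? c)%nat (h c n)) M) (S M))
  = Cplus (psum2 h M) (sum_n (h (S M)) M).
Proof.
  rewrite sumC_shift. rewrite (sumC_zero_ext (fun n => indic (n <? 0)%nat (h n (pred 0)))) by (intro; reflexivity).
  rewrite sumC_S.
  rewrite (sumC_ext_loc (fun n => indic (n <? S M)%nat (h (S M) n)) (h (S M))).
  2:{ intros i Hi. unfold indic. destruct (Nat.ltb_spec i (S M)); auto. lia. }
  rewrite (fubini (fun c n => indic (n <? S c)%nat (h n (pred (S c))))).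
  unfold psum2.
  assert (E : Cplus (sum_n (fun j => sum_n (fun i => indic (j <? S i)%nat (h j (pred (S i)))) M) M)
           (sum_n (fun c => sum_n (fun n => indic (n <? c)%nat (h c n)) M) M)
         = sum_n (fun i => sum_n (fun j => h i j) M) M).
  { rewrite <- sumC_plus. apply sumC_ext; intro i. rewrite <- sumC_plus. apply sumC_ext; intro j.
    simpl pred. unfold indic. destruct (Nat.ltb_spec i (S j)); destruct (Nat.ltb_spec j i); try lia; cring. }
  rewrite <- E. cring.
Qed.

Lemma ML2 (k : nat -> nat -> C) M :
  sum_n (fun c => sum_n (fun n => indic (n <? c)%nat (k n c)) M) (S M) = psum2 (Bt k) (S M).
Proof.
  unfold psum2, Bt. rewrite (fubini (fun i j => indic (i <? j)%nat (k i j))).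
  apply sumC_ext_loc. intros c Hc. rewrite sumC_S.
  destruct (Nat.ltb_spec (S M) c). lia. rewrite indic_false. cring.
Qed.

Lemma ML3 (l : nat -> nat -> C) M :
  sum_n (fun c => sum_n (fun n => indic (n <? c)%nat (l c n)) M) (S M) = psum2 (Ct l) (S M).
Proof.
  unfold psum2, Ct.
  apply sumC_ext_loc. intros c Hc. rewrite sumC_S.
  destruct (Nat.ltb_spec (S M) c). lia. rewrite indic_false. cring.
Qed.

Lemma FI (h k l : nat -> nat -> C) M :
  psum2 (Gt h k l) (S M) = Cplus (Cminus (Cminus (psum2 h M) (psum2 (Bt k) (S M))) (psum2 (Ct l) (S M))) (bd h k l M).
Proof.
  set (u1a := fun n c => Copp (h n (pred c))).
  set (u1b := fun n c => Copp (h c n)).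
  set (u3 := fun n c => l c n).
  rewrite (psum2_ext _ (fun i j => Cplus (Cplus (Cplus (TT u1a i j) (TT u1b j i)) (TT k i j)) (TT u3 j i))).
  2:{ intros i j. unfold Gt, TT, u1a, u1b, u3. destruct i, j; cbn [indic Nat.leb andb pred]; try cring.
      rewrite (Nat.min_comm (S j) (S i)). cring. }
  rewrite !psum2_plus.
  assert (E1 : psum2 (TT u1a) (S M) = sum_n (fun c => sum_n (fun n => TT u1a n c) (S M)) (S M)).
  { unfold psum2. apply fubini. }
  assert (E2 : psum2 (TT k) (S M) = sum_n (fun c => sum_n (fun n => TT k n c) (S M)) (S M)).
  { unfold psum2. apply fubini. }
  assert (E3 : psum2 (fun i j => TT u1b j i) (S M) = sum_n (fun c => sum_n (fun n => TT u1b n c) (S M)) (S M)).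
  { reflexivity. }
  assert (E4 : psum2 (fun i j => TT u3 j i) (S M) = sum_n (fun c => sum_n (fun n => TT u3 n c) (S M)) (S M)).
  { reflexivity. }
  rewrite E1, E2, E3, E4, !RL'.
  rewrite <- ML2, <- ML3.
  pose proof (ML1 h M) as H1.
  assert (Ea : sum_n (fun c => sum_n (fun n => indic (n <? c)%nat (u1a n c)) M) (S M)
     = Copp (sum_n (fun c => sum_n (fun n => indic (n <? c)%nat (h n (pred c))) M) (S M))).
  { rewrite <- sumC_opp. apply sumC_ext; intro c. rewrite <- sumC_opp. apply sumC_ext; intro n.
    unfold indic, u1a. destruct (n <? c)%nat; cring. }
  assert (Eb : sum_n (fun c => sum_n (fun n => indic (n <? c)%nat (u1b n c)) M) (S M)
     = Copp (sum_n (fun c => sum_n (fun n => indic (n <? c)%nat (h c n)) M) (S M))).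
  { rewrite <- sumC_opp. apply sumC_ext; intro c. rewrite <- sumC_opp. apply sumC_ext; intro n.
    unfold indic, u1b. destruct (n <? c)%nat; cring. }
  assert (Ec : sum_n (fun c => sum_n (fun n => indic (n <? c)%nat (u3 n c)) M) (S M)
     = sum_n (fun c => sum_n (fun n => indic (n <? c)%nat (l c n)) M) (S M)) by reflexivity.
  rewrite Ea, Eb, Ec.
  unfold bd. fold u1a u1b u3.
  revert H1.
  generalize (sum_n (fun c => sum_n (fun n => indic (n <? c)%nat (h n (pred c))) M) (S M)).
  generalize (sum_n (fun c => sum_n (fun n => indic (n <? c)%nat (h c n)) M) (S M)).
  intros X Y H1.
  assert (HA : psum2 h M = Cminus (Cplus Y X) (sum_n (h (S M)) M)).
  { change (@eq C (psum2 h M) (Cminus (Cplus Y X) (sum_n (h (S M)) M))). rewrite H1. ring. }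
  rewrite HA. cring.
Qed.


Lemma cexp_add z w : Cmult (cexp z) (cexp w) = cexp (Cplus z w).
Proof.
  destruct z as [a b], w as [c d]. unfold cexp, Cmult, Cplus. simpl.
  rewrite exp_plus, cos_plus, sin_plus. f_equal; ring.
Qed.

Lemma qpow_add tau x y : Cmult (qpow tau x) (qpow tau y) = qpow tau (x + y).
Proof. unfold qpow. rewrite cexp_add. f_equal. rewrite RtoC_plus. ring. Qed.

Lemma Cmod_qpow tau x : Cmod (qpow tau x) = exp (- (2 * PI * Im tau) * x).
Proof.
  destruct tau as [t1 t2]. unfold qpow, cexp, Cmod, Cmult, RtoC. simpl.
  replace ((0 * t1 - 2 * PI * t2) * x - (0 * t2 + 2 * PI * t1) * 0) with (- (2 * PI * t2) * x) by ring.
  set (a := exp (- (2 * PI * t2) * x)).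
  set (th := ((0 * t1 - 2 * PI * t2) * 0 + (0 * t2 + 2 * PI * t1) * x)).
  assert (Ha : 0 < a) by apply exp_pos.
  pose proof (sin2_cos2 th) as Hs. unfold Rsqr in Hs.
  replace (a * cos th * (a * cos th * 1) + a * sin th * (a * sin th * 1)) with (a ^ 2)
    by (replace (a ^ 2) with (a ^ 2 * (sin th * sin th + cos th * cos th)) by (rewrite Hs; ring); ring).
  apply sqrt_pow2. lra.
Qed.

Lemma Q_bound tau x y : 0 < Im tau ->
  Cmod (qpow tau (2 * Qf x y)) <= exp (- (2 * PI * Im tau) * x ^ 2) /\
  Cmod (qpow tau (2 * Qf x y)) <= exp (- (2 * PI * Im tau) * y ^ 2).
Proof.
  intros Ht. rewrite Cmod_qpow. pose proof PI_RGT_0.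
  assert (Hc : 0 < 2 * PI * Im tau) by (apply Rmult_lt_0_compat; lra).
  unfold Qf. split; apply exp_le; apply Rmult_le_compat_neg_l; nra.
Qed.

Lemma gauss c mu x : 0 < c -> exp (- c * (x + mu) ^ 2) <= exp (9 / (4 * c) - 3 * mu) * exp (- 3 * x).
Proof.
  intros Hc. rewrite <- exp_plus. apply exp_le.
  set (t := x + mu).
  assert (E : 9 / (4 * c) - 3 * mu + -3 * x - (- c * t ^ 2) = (2 * c * t - 3) ^ 2 / (4 * c)).
  { unfold t. field. lra. }
  assert (0 <= (2 * c * t - 3) ^ 2 / (4 * c)).
  { apply Rmult_le_pos. apply pow2_ge_0. left; apply Rinv_0_lt_compat; lra. }
  lra.
Qed.

Definition decays (f : nat -> nat -> C) (K : R) : Prop :=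
  0 <= K /\ forall i j, Cmod (f i j) <= K * exp (-3 * INR i) /\ Cmod (f i j) <= K * exp (-3 * INR j).

Lemma decay_qpow tau al be : 0 < Im tau ->
  exists K, decays (fun i j => qpow tau (2 * Qf (INR i + al) (INR j + be))) K.
Proof.
  intros Ht. pose proof PI_RGT_0.
  assert (Hc : 0 < 2 * PI * Im tau) by (apply Rmult_lt_0_compat; lra).
  set (c := 2 * PI * Im tau) in *.
  exists (exp (9 / (4 * c) - 3 * al) + exp (9 / (4 * c) - 3 * be)).
  pose proof (exp_pos (9 / (4 * c) - 3 * al)). pose proof (exp_pos (9 / (4 * c) - 3 * be)).
  split. lra. intros i j.
  destruct (Q_bound tau (INR i + al) (INR j + be) Ht) as [Hb1 Hb2]. fold c in Hb1, Hb2.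
  pose proof (gauss c al (INR i) Hc). pose proof (gauss c be (INR j) Hc).
  pose proof (exp_pos (-3 * INR i)). pose proof (exp_pos (-3 * INR j)).
  split; nra.
Qed.

Lemma decays_indic f K (b : nat -> nat -> bool) : decays f K -> decays (fun i j => indic (b i j) (f i j)) K.
Proof.
  intros [HK H]. split; auto. intros i j. destruct (H i j). pose proof (Cmod_indic (b i j) (f i j)). lra.
Qed.


Definition strip (f : nat -> nat -> C) (n : nat) : C :=
  match n with 0%nat => f 0%nat 0%nat | S N => Cplus (sum_n (f (S N)) N) (sum_n (fun i => f i (S N)) (S N)) end.

Lemma psum2_strip f N : psum2 f N = sum_n (strip f) N.
Proof.
  induction N.
  - unfold psum2. rewrite !sumC_O. reflexivity.
  - rewrite sumC_S, <- IHN. unfold psum2. simpl strip.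
    rewrite (sumC_ext (fun i => sum_n (fun j => f i j) (S N)) (fun i => Cplus (sum_n (fun j => f i j) N) (f i (S N))))
      by (intro; apply sumC_S).
    rewrite sumC_plus, sumC_S, <- Cplus_assoc. reflexivity.
Qed.

Lemma exp_pow_INR a n : exp a ^ n = exp (INR n * a).
Proof.
  induction n. simpl. rewrite Rmult_0_l, exp_0. reflexivity.
  simpl pow. rewrite IHn, <- exp_plus, S_INR. f_equal. ring.
Qed.

Lemma strip_bound f K n : decays f K -> Cmod (strip f n) <= 3 * K * exp (-2) ^ n.
Proof.
  intros [HK H]. rewrite exp_pow_INR. destruct n as [|N].
  - simpl. destruct (H 0%nat 0%nat) as [H1 _]. simpl in H1. rewrite Rmult_0_r, exp_0 in H1. rewrite Rmult_0_l, exp_0. lra.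
  - simpl strip. eapply Rle_trans. apply Cmod_triangle.
    assert (B1 : Cmod (sum_n (f (S N)) N) <= INR (S N) * (K * exp (-3 * INR (S N)))).
    { apply Cmod_sum_bound. intros i _. apply H. }
    assert (B2 : Cmod (sum_n (fun i => f i (S N)) (S N)) <= INR (S (S N)) * (K * exp (-3 * INR (S N)))).
    { apply Cmod_sum_bound. intros i _. apply H. }
    set (x := INR (S N)) in *.
    assert (Hx : x = INR N + 1) by (unfold x; apply S_INR).
    rewrite S_INR in B2. fold x in B2.
    pose proof (pos_INR N).
    assert (E1 : exp (-3 * x) = exp (-2 * x) * exp (- x)) by (rewrite <- exp_plus; f_equal; ring).
    assert (E2 : exp x * exp (- x) = 1) by (rewrite <- exp_plus; replace (x + - x) with 0 by ring; apply exp_0).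
    pose proof (exp_ineq1_le x). pose proof (exp_pos x). pose proof (exp_pos (- x)). pose proof (exp_pos (-2 * x)).
    rewrite E1 in B1, B2. replace (INR (S N) * -2) with (-2 * x) by (unfold x; ring).
    assert (Hk : (2 * INR N + 3) * exp (- x) <= 3).
    { assert ((2 * INR N + 3) * exp (- x) <= 3 * (1 + x) * exp (- x)) by (apply Rmult_le_compat_r; lra).
      assert (3 * (1 + x) * exp (- x) <= 3 * exp x * exp (- x)) by (apply Rmult_le_compat_r; lra).
      lra. }
    assert (Cmod (sum_n (f (S N)) N) + Cmod (sum_n (fun i => f i (S N)) (S N)) <=
            K * exp (-2 * x) * ((2 * INR N + 3) * exp (- x))) by nra.
    assert (K * exp (-2 * x) * ((2 * INR N + 3) * exp (- x)) <= K * exp (-2 * x) * 3).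
    { apply Rmult_le_compat_l. nra. lra. }
    replace (x * -2) with (-2 * x) by ring. lra.
Qed.

Lemma conv_of_decay f K : decays f K -> exists l, sum2_is f l.
Proof.
  intros HD.
  assert (Hs : ex_series (V := C_CompleteNormedModule) (strip f)).
  { apply (ex_series_le (V := C_CompleteNormedModule) (strip f) (fun n => 3 * K * exp (-2) ^ n)).
    - intro n. apply (strip_bound f K n HD).
    - apply (ex_series_scal_l (V := R_NormedModule) (3 * K) (fun n => exp (-2) ^ n)).
      apply ex_series_geom. rewrite Rabs_pos_eq. 2: left; apply exp_pos.
      rewrite <- exp_0. apply exp_increasing. lra. }
  destruct Hs as [l Hl]. exists l. unfold sum2_is.
  eapply filterlim_ext. 2: exact Hl. intro N. simpl. symmetry. apply psum2_strip.
Qed.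


Lemma expand tau x y1 y2 y3 y4 y5 (m : C) :
  Cmult (Cmult m (qpow tau x)) (Cminus (Cplus (Cminus (Cminus (RtoC 1) (qpow tau y1)) (qpow tau y2)) (Cplus (qpow tau y3) (qpow tau y4))) (qpow tau y5))
  = Cmult m (Cminus (Cplus (Cplus (Cminus (Cminus (qpow tau x) (qpow tau (x+y1))) (qpow tau (x+y2))) (qpow tau (x+y3))) (qpow tau (x+y4))) (qpow tau (x+y5))).
Proof. rewrite <- !qpow_add. ring. Qed.

Lemma cong6 (a1 a2 a3 a4 a5 a6 b1 b2 b3 b4 b5 b6 : C) :
  a1 = b1 -> a2 = b2 -> a3 = b3 -> a4 = b4 -> a5 = b5 -> a6 = b6 ->
  Cminus (Cplus (Cplus (Cminus (Cminus a1 a2) a3) a4) a5) a6 = Cminus (Cplus (Cplus (Cminus (Cminus b1 b2) b3) b4) b5) b6.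
Proof. intros; subst; reflexivity. Qed.

Lemma qpow_ext tau x y : x = y -> qpow tau x = qpow tau y.
Proof. intros; subst; reflexivity. Qed.

Definition kf tau l1 l2 (n1 n2 : nat) := qpow tau (2 * Qf (INR n1 + l1 + /2) (INR n2 + l2)).
Definition lf tau l1 l2 (n1 n2 : nat) := qpow tau (2 * Qf (INR n1 + l1) (INR n2 + l2 + /2)).

Lemma GtE tau l1 l2 n1 n2 : G_term tau l1 l2 n1 n2 = Gt (A_term tau l1 l2) (kf tau l1 l2) (lf tau l1 l2) n1 n2.
Proof.
  destruct n1 as [|a], n2 as [|b]; try reflexivity.
  unfold G_term, Gt. cbn [andb Nat.leb indic pred]. rewrite expand. f_equal.
  unfold A_term, kf, lf.
  apply cong6; apply qpow_ext; rewrite ?S_INR; unfold Qf; field.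
Qed.

Lemma Bd_bound u M B : 0 <= B -> (forall c, Cmod (u (S M) c) <= B) ->
  Cmod (Bd u M) <= INR (S (S M)) * (INR (S M) * B).
Proof.
  intros HB H. unfold Bd. apply Cmod_sum_bound. intros c _.
  eapply Rle_trans. apply Cmod_indic. rewrite Cmod_mult, Cmod_R, Rabs_pos_eq by apply pos_INR.
  apply Rmult_le_compat; auto using pos_INR, Cmod_ge_0. apply le_INR. apply Nat.le_min_l.
Qed.

Lemma bd_bound h k l K M : decays h K -> decays k K -> decays l K ->
  Cmod (bd h k l M) <= 5 * K / (INR M + 2).
Proof.
  intros [HK Hh] [_ Hk] [_ Hl].
  set (B := K * exp (-3 * INR (S M))).
  assert (HB : 0 <= B) by (unfold B; pose proof (exp_pos (-3 * INR (S M))); nra).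
  assert (B1 : Cmod (Bd (fun n c => Copp (h n (pred c))) M) <= INR (S (S M)) * (INR (S M) * B)).
  { apply Bd_bound; auto. intro c. rewrite Cmod_opp. apply Hh. }
  assert (B2 : Cmod (Bd (fun n c => Copp (h c n)) M) <= INR (S (S M)) * (INR (S M) * B)).
  { apply Bd_bound; auto. intro c. rewrite Cmod_opp. apply Hh. }
  assert (B3 : Cmod (Bd k M) <= INR (S (S M)) * (INR (S M) * B)).
  { apply Bd_bound; auto. intro c. apply Hk. }
  assert (B4 : Cmod (Bd (fun n c => l c n) M) <= INR (S (S M)) * (INR (S M) * B)).
  { apply Bd_bound; auto. intro c. apply Hl. }
  assert (B5 : Cmod (sum_n (h (S M)) M) <= INR (S M) * B).
  { apply Cmod_sum_bound. intros; apply Hh. }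
  assert (T : Cmod (bd h k l M) <= 5 * (INR M + 2) ^ 2 * B).
  { unfold bd.
    match goal with |- Cmod (Cplus (Cplus (Cplus (Cplus ?a ?b) ?c) ?d) ?e) <= _ =>
      pose proof (Cmod_triangle (Cplus (Cplus (Cplus a b) c) d) e);
      pose proof (Cmod_triangle (Cplus (Cplus a b) c) d);
      pose proof (Cmod_triangle (Cplus a b) c);
      pose proof (Cmod_triangle a b) end.
    rewrite !S_INR in *. pose proof (pos_INR M). nra. }
  eapply Rle_trans. exact T.
  unfold B. set (x := INR (S M)). assert (Hx : x = INR M + 1) by apply S_INR.
  pose proof (pos_INR M).
  assert (E1 : exp (-3 * x) = exp (- x) ^ 3) by (rewrite exp_pow_INR; f_equal; simpl; ring).
  assert (E2 : exp x * exp (- x) = 1) by (rewrite <- exp_plus; replace (x + - x) with 0 by ring; apply exp_0).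
  pose proof (exp_ineq1_le x). pose proof (exp_pos x). pose proof (exp_pos (- x)).
  set (y := INR M + 2) in *. set (F := exp (- x)) in *.
  assert (Hy : 0 < y) by (unfold y; lra).
  assert (Hye : y <= exp x) by (unfold y; lra).
  assert (HyF : y * F <= 1) by (rewrite <- E2; apply Rmult_le_compat_r; lra).
  assert (HyF0 : 0 <= y * F) by nra.
  assert (HyF3 : (y * F) ^ 3 <= 1).
  { replace 1 with (1 ^ 3) by ring. apply pow_incr. lra. }
  rewrite E1. apply (Rmult_le_reg_r y); auto.
  replace (5 * K / y * y) with (5 * K) by (field; lra).
  replace (5 * y ^ 2 * (K * F ^ 3) * y) with (5 * K * (y * F) ^ 3) by ring.
  nra.
Qed.


Lemma lim_C (u : nat -> C) L : filterlim u eventually (locally L) <->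
  (forall eps, 0 < eps -> exists N, forall n, (N <= n)%nat -> Cmod (Cminus (u n) L) < eps).
Proof.
  rewrite (filterlim_locally_ball_norm (K := C_AbsRing) (U := C_NormedModule)).
  split.
  - intros H eps He. destruct (H (mkposreal eps He)) as [N HN]. exists N. intros n Hn. apply (HN n Hn).
  - intros H eps. destruct (H eps (cond_pos eps)) as [N HN]. exists N. intros n Hn. apply (HN n Hn).
Qed.

Lemma decays_ext f g K : (forall i j, f i j = g i j) -> decays g K -> decays f K.
Proof. intros E [HK H]. split; auto. intros i j. rewrite E. apply H. Qed.

Lemma decays_mono f K K' : K <= K' -> decays f K -> decays f K'.
Proof.
  intros HKK [HK H]. split. lra. intros i j. destruct (H i j).
  pose proof (exp_pos (-3 * INR i)). pose proof (exp_pos (-3 * INR j)). split; nra.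
Qed.

Theorem lemma3p5 (lam1 lam2 : Q) (tau : C) (Htau : 0 < Im tau) :
  exists SA SB SC : C,
    sum2_is (A_term tau (Q2R lam1) (Q2R lam2)) SA /\
    sum2_is (B_term tau (Q2R lam1) (Q2R lam2)) SB /\
    sum2_is (C_term tau (Q2R lam1) (Q2R lam2)) SC /\
    sum2_is (G_term tau (Q2R lam1) (Q2R lam2)) (Cminus (Cminus SA SB) SC).
Proof.
  set (l1 := Q2R lam1). set (l2 := Q2R lam2).
  set (h := A_term tau l1 l2). set (k := kf tau l1 l2). set (l := lf tau l1 l2).
  destruct (decay_qpow tau (l1 + /2) (l2 + /2) Htau) as [K1 D1].
  destruct (decay_qpow tau (l1 + /2) l2 Htau) as [K2 D2].
  destruct (decay_qpow tau l1 (l2 + /2) Htau) as [K3 D3].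
  assert (HK1 : 0 <= K1) by apply D1. assert (HK2 : 0 <= K2) by apply D2. assert (HK3 : 0 <= K3) by apply D3.
  set (K := K1 + K2 + K3).
  assert (Dh : decays h K).
  { apply (decays_mono _ K1). unfold K; lra.
    apply (decays_ext _ _ K1 (fun i j => f_equal (qpow tau) (f_equal (fun z => 2 * z) (f_equal2 Qf (Rplus_assoc _ _ _) (Rplus_assoc _ _ _))))). exact D1. }
  assert (Dk : decays k K).
  { apply (decays_mono _ K2). unfold K; lra.
    apply (decays_ext _ _ K2 (fun i j => f_equal (qpow tau) (f_equal (fun z => 2 * z) (f_equal2 Qf (Rplus_assoc _ _ _) eq_refl)))). exact D2. }
  assert (Dl : decays l K).
  { apply (decays_mono _ K3). unfold K; lra.
    apply (decays_ext _ _ K3 (fun i j => f_equal (qpow tau) (f_equal (fun z => 2 * z) (f_equal2 Qf eq_refl (Rplus_assoc _ _ _))))). exact D3. }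
  destruct (conv_of_decay h K Dh) as [SA HA].
  destruct (conv_of_decay (Bt k) K (decays_indic k K _ Dk)) as [SB HB].
  destruct (conv_of_decay (Ct l) K (decays_indic l K _ Dl)) as [SC HC].
  exists SA, SB, SC. split; [exact HA|]. split; [exact HB|]. split; [exact HC|].
  unfold sum2_is in *. rewrite lim_C in HA, HB, HC |- *.
  intros eps He.
  destruct (HA (eps / 5)) as [NA HNA]. lra.
  destruct (HB (eps / 5)) as [NB HNB]. lra.
  destruct (HC (eps / 5)) as [NC HNC]. lra.
  assert (HK : 0 <= K) by (unfold K; lra).
  destruct (INR_archimed (eps / 5) (5 * K)) as [ND HND]. lra.
  exists (S (NA + NB + NC + ND)). intros n Hn.
  destruct n as [|M]. lia.
  rewrite (psum2_ext _ (Gt h k l)) by (intros; apply GtE).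
  rewrite FI.
  specialize (HNA M ltac:(lia)). specialize (HNB (S M) ltac:(lia)). specialize (HNC (S M) ltac:(lia)).
  pose proof (bd_bound h k l K M Dh Dk Dl) as HD.
  assert (HD2 : 5 * K / (INR M + 2) < eps / 5).
  { assert (INR ND <= INR M) by (apply le_INR; lia).
    pose proof (pos_INR M). apply (Rmult_lt_reg_r (INR M + 2)). lra.
    replace (5 * K / (INR M + 2) * (INR M + 2)) with (5 * K) by (field; lra).
    nra. }
  set (a := Cminus (psum2 h M) SA) in *.
  set (b := Cminus (psum2 (Bt k) (S M)) SB) in *.
  set (c := Cminus (psum2 (Ct l) (S M)) SC) in *.
  set (d := bd h k l M) in *.
  replace (Cminus (Cplus (Cminus (Cminus (psum2 h M) (psum2 (Bt k) (S M))) (psum2 (Ct l) (S M))) d) (Cminus (Cminus SA SB) SC))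
    with (Cplus (Cminus (Cminus a b) c) d) by (unfold a, b, c; cring).
  pose proof (Cmod_triangle (Cminus (Cminus a b) c) d).
  pose proof (Cmod_triangle (Cminus a b) (Copp c)).
  pose proof (Cmod_triangle a (Copp b)).
  rewrite Cmod_opp in *.
  unfold Cminus in *. lra.
Qed.
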